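(* Let $q > 1$ be an integer. For all positive integers $n$ and $M$, $$|C(n,q,M+1)| \geq q\cdot|C(n,q,M)|.$$
   Context: Fix the alphabet $\{x_0,\ldots,x_{q-1}\}$ of $q$ letters. A word $W$ is an instance of a word $V = y_0y_1\cdots y_{m-1}$ (each $y_i$ a letter) if $W = A_0A_1\cdots A_{m-1}$ with each $A_i$ a nonempty word and $A_i = A_j$ whenever $y_i = y_j$. The Zimin words are defined by $Z_0 := \varepsilon$ (the empty word) and $Z_{n+1} := Z_n z_n Z_n$ for distinct letters $z_0,z_1,\dots$ (so $Z_1 = a$, $Z_2 = aba$, $Z_3=abacaba$). $C(n,q,M)$ denotes the set of words $W \in \{x_0,\ldots,x_{q-1}\}^M$ that are instances of $Z_n$. *)

(* Defs.v *)
From mathcomp Require Import all_boot.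
From mathcomp Require Import boolp.
Set Implicit Arguments. Unset Strict Implicit. Unset Printing Implicit Defensive.

Fixpoint zimin (n : nat) : seq nat :=
  if n is k.+1 then zimin k ++ k :: zimin k else [::].

Definition is_instance (T : eqType) (W : seq T) (V : seq nat) : Prop :=
  exists As : seq (seq T),
    [/\ size As = size V,
        all (fun A => A != [::]) As,
        flatten As = W &
        forall i j, i < size V -> j < size V ->
          nth 0 V i = nth 0 V j ->
          nth [::] As i = nth [::] As j].

Definition C (n q M : nat) : {set M.-tuple 'I_q} :=
  [set w : M.-tuple 'I_q | `[< is_instance (tval w) (zimin n) >]].

(* Main.v *)
Require Import Defs.
From mathcomp Require Import all_boot.
From mathcomp Require Import boolp zify.
Set Implicit Arguments. Unset Strict Implicit. Unset Printing Implicit Defensive.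

Lemma zimin_lt n x : x \in zimin n -> x < n.
Proof.
elim: n => [|n IH] //=.
rewrite mem_cat in_cons => /or3P [/IH H|/eqP->|/IH H]; lia.
Qed.

Lemma mid_nth (T : Type) (d : T) s x i :
  nth d (s ++ x :: s) i =
  if i < size s then nth d s i else if i == size s then x
  else nth d s (i - (size s).+1).
Proof.
rewrite nth_cat; case: ltnP => // H.
case: eqP => [->|ne]; first by rewrite subnn.
have -> : i - size s = (i - (size s).+1).+1 by lia.
by [].
Qed.

Lemma inst_step (T : eqType) m (W : seq T) :
  is_instance W (zimin m.+1) <->
  exists U v, [/\ v != [::], is_instance U (zimin m) & W = U ++ v ++ U].
Proof.
have EZ : zimin m.+1 = zimin m ++ m :: zimin m by [].
rewrite /is_instance EZ.
have Hlt : forall i, i < size (zimin m) -> nth 0 (zimin m) i < m.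
  by move=> i Hi; apply: zimin_lt; exact: mem_nth.
move: (zimin m) Hlt => s Hlt.
split.
- move=> [As [Hsz Hall Hfl Hc]].
  rewrite size_cat /= in Hsz Hc.
  have HAs : As = take (size s) As ++ nth [::] As (size s) :: drop (size s).+1 As.
    by rewrite -drop_nth ?cat_take_drop //; lia.
  have H2 : drop (size s).+1 As = take (size s) As.
    apply: (@eq_from_nth _ [::]).
      by rewrite size_drop size_takel; lia.
    move=> i Hi; rewrite size_drop in Hi.
    rewrite nth_drop nth_take; last by lia.
    apply: Hc; try lia.
    rewrite !mid_nth.
    have -> : ((size s).+1 + i < size s) = false by apply/negbTE; lia.
    have -> : ((size s).+1 + i == size s) = false by apply/negbTE; lia.
    have -> : (i < size s) = true by lia.
    congr nth; lia.
  exists (flatten (take (size s) As)), (nth [::] As (size s)); split.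
  + by move: Hall => /allP; apply; rewrite mem_nth // Hsz; lia.
  + exists (take (size s) As); split.
    * by rewrite size_takel //; lia.
    * by move: Hall; rewrite {1}HAs all_cat => /andP [].
    * by [].
    * move=> i j Hi Hj E; rewrite !nth_take //; apply: Hc; try lia.
      by rewrite !mid_nth Hi Hj.
  + by rewrite -Hfl [in LHS]HAs H2 flatten_cat.
- move=> [U [v [Hv [As1 [Hsz Hall Hfl Hc]]] ->]].
  exists (As1 ++ v :: As1); split.
  + by rewrite !size_cat /= Hsz.
  + by rewrite all_cat /= Hall Hv.
  + by rewrite flatten_cat /= Hfl.
  + have key : forall i, i < size s + (size s).+1 -> i != size s ->
      exists2 i', i' < size s &
        (nth 0 (s ++ m :: s) i = nth 0 s i' /\
         nth [::] (As1 ++ v :: As1) i = nth [::] As1 i').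
      move=> i Hi Hne; rewrite !mid_nth Hsz.
      case: ltnP => H; first by exists i.
      exists (i - (size s).+1); first lia.
      by rewrite (negbTE Hne).
    move=> i j; rewrite size_cat /= => Hi Hj.
    case: (eqVneq i (size s)) => [->|Hni]; case: (eqVneq j (size s)) => [->|Hnj] //.
    * have [j' Hj' [-> _]] := key j Hj Hnj.
      rewrite mid_nth ltnn eqxx => E.
      by have := Hlt _ Hj'; rewrite -E ltnn.
    * have [i' Hi' [-> _]] := key i Hi Hni.
      rewrite mid_nth ltnn eqxx => E.
      by have := Hlt _ Hi'; rewrite E ltnn.
    * have [i' Hi' [-> ->]] := key i Hi Hni.
      have [j' Hj' [-> ->]] := key j Hj Hnj.
      by apply: Hc.
Qed.

Definition good m (T : eqType) (w : seq T) k : bool :=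
  [&& k + k < size w, take k w == drop (size w - k) w &
      `[< is_instance (take k w) (zimin m) >] ].

Lemma good_inst m (T : eqType) (w : seq T) :
  is_instance w (zimin m.+1) <-> exists k, good m w k.
Proof.
split.
- case/inst_step => U [v [Hv HU ->]].
  exists (size U); apply/and3P; split.
  + have : 0 < size v by case: v Hv.
    rewrite !size_cat; lia.
  + have E : size (U ++ v ++ U) - size U = size (U ++ v) by rewrite !size_cat; lia.
    by rewrite take_size_cat // E catA drop_size_cat.
  + by apply/asboolP; rewrite take_size_cat.
- move=> [k /and3P [Hk /eqP Heq /asboolP HU]].
  apply/inst_step.
  exists (take k w), (drop k (take (size w - k) w)); split => //.
  + by rewrite -size_eq0 size_drop (size_takel (leq_subr _ _)); lia.
  + rewrite [X in _ ++ _ ++ X]Heq catA.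
    have -> : take k w = take k (take (size w - k) w) by rewrite take_takel //; lia.
    by rewrite cat_take_drop cat_take_drop.
Qed.

Definition kf m (T : eqType) (w : seq T) := find (good m w) (iota 0 (size w)).

Lemma kf_good m (T : eqType) (w : seq T) :
  is_instance w (zimin m.+1) -> good m w (kf m w).
Proof.
move=> /good_inst [k Hk].
have Hhas : has (good m w) (iota 0 (size w)).
  apply/hasP; exists k => //; rewrite mem_iota /=.
  by move: Hk => /and3P [H _ _]; lia.
have := nth_find 0 Hhas.
rewrite nth_iota ?add0n //.
by move: Hhas; rewrite has_find size_iota.
Qed.

Lemma kf_min m (T : eqType) (w : seq T) k : k < kf m w -> ~~ good m w k.
Proof.
move=> H.
have Hs : kf m w <= size w by rewrite /kf -{2}(size_iota 0 (size w)) find_size.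
have := before_find 0 H.
by rewrite nth_iota ?add0n => [->|]; last lia.
Qed.

Lemma kf_eq m (T : eqType) (w : seq T) k :
  good m w k -> (forall k', k' < k -> ~~ good m w k') -> kf m w = k.
Proof.
move=> Hg Hm.
case: (ltngtP (kf m w) k) => // H.
- have := Hm _ H. rewrite kf_good //. by apply/good_inst; exists k.
- by have := kf_min H; rewrite Hg.
Qed.

Definition ins k (T : Type) (a : T) (w : seq T) :=
  take (size w - k) w ++ a :: drop (size w - k) w.

Lemma size_ins k (T : Type) (a : T) w : size (ins k a w) = (size w).+1.
Proof. rewrite /ins size_cat /= size_drop (size_takel (leq_subr _ _)); lia. Qed.

Lemma good_ins m (T : eqType) k (a : T) (w : seq T) k' :
  k + k < size w -> k' <= k -> good m (ins k a w) k' = good m w k'.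
Proof.
move=> Hk Hk'.
have Ht : take k' (ins k a w) = take k' w.
  rewrite /ins take_cat (size_takel (leq_subr _ _)).
  have -> : (k' < size w - k) = true by lia.
  by rewrite take_takel //; lia.
have Hd : drop (size (ins k a w) - k') (ins k a w) = drop (size w - k') w.
  rewrite size_ins /ins drop_cat (size_takel (leq_subr _ _)).
  have -> : ((size w).+1 - k' < size w - k) = false by apply/negbTE; lia.
  have -> : (size w).+1 - k' - (size w - k) = (k - k').+1 by lia.
  rewrite /= drop_drop; congr drop; lia.
rewrite /good Ht Hd size_ins.
have H1 : k' + k' < size w by lia.
have H2 : k' + k' < (size w).+1 by lia.
by rewrite H1 H2.
Qed.

Lemma ins_main m (T : eqType) (a : T) (w : seq T) :
  is_instance w (zimin m.+1) ->
  kf m (ins (kf m w) a w) = kf m w /\ is_instance (ins (kf m w) a w) (zimin m.+1).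
Proof.
move=> Hw.
set k := kf m w.
have Hg : good m w k by exact: kf_good.
have Hk : k + k < size w by move: Hg => /and3P [].
have Hg' : good m (ins k a w) k by rewrite good_ins.
split.
- apply: kf_eq => // k' Hk'.
  rewrite good_ins; [exact: kf_min | lia | lia].
- by apply/good_inst; exists k.
Qed.

Lemma ins_inj k (T : eqType) (a1 a2 : T) (w1 w2 : seq T) :
  size w1 = size w2 -> ins k a1 w1 = ins k a2 w2 -> a1 = a2 /\ w1 = w2.
Proof.
move=> Hs /eqP; rewrite /ins Hs eqseq_cat; last first.
  by rewrite !size_takel ?Hs ?leq_subr.
move=> /andP [/eqP H1 /eqP [-> H2]]; split => //.
move: H1 H2; set n := size w2 - k => H1 H2.
by rewrite -(cat_take_drop n w1) -(cat_take_drop n w2) H1 H2.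
Qed.

Lemma insP m q M (a : 'I_q) (w : M.-tuple 'I_q) :
  size (ins (kf m w) a w) == M.+1.
Proof. by rewrite size_ins size_tuple. Qed.

Theorem mainTheorem3 (q : nat) (hq : 1 < q) (n M : nat)
  (hn : 0 < n) (hM : 0 < M) :
  q * #|C n q M| <= #|C n q M.+1|.
Proof.
case: n hn => // m _.
pose f := fun p : 'I_q * M.-tuple 'I_q => (Tuple (insP m p.1 p.2) : M.+1.-tuple 'I_q).
have Hinj : {in setX [set: 'I_q] (C m.+1 q M) &, injective f}.
  move=> [a1 w1] [a2 w2]; rewrite !inE /= => /asboolP H1 /asboolP H2 /(congr1 val) /= E.
  have [E1 _] := ins_main a1 H1.
  have [E2 _] := ins_main a2 H2.
  have Ek : kf m w1 = kf m w2 by rewrite -E1 -E2 E.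
  rewrite Ek in E.
  have [-> Hw] := ins_inj (etrans (size_tuple w1) (esym (size_tuple w2))) E.
  by congr pair; apply: val_inj.
have Hsub : f @: setX [set: 'I_q] (C m.+1 q M) \subset C m.+1 q M.+1.
  apply/subsetP => _ /imsetP [[a w] + ->]; rewrite !inE /= => /asboolP H.
  by apply/asboolP; exact: (ins_main a H).2.
have -> : q * #|C m.+1 q M| = #|setX [set: 'I_q] (C m.+1 q M)|.
  by rewrite cardsX cardsT card_ord.
rewrite -(card_in_imset Hinj).
exact: subset_leq_card.
Qed.
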